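(* Every complex $3$-dimensional $(-1,1)$-superalgebra of type $(2,1)$ is associative.
   Context: All algebras are over $\mathbb{C}$. A superalgebra is a $\mathbb{Z}_2$-graded algebra $A=A_0\oplus A_1$ with $A_iA_j\subseteq A_{i+j \bmod 2}$; $|x|\in\{0,1\}$ is the degree of a homogeneous $x$. It has type $(n,m)$ if $\dim A_0=n$, $\dim A_1=m$. The associator is $(x,y,z)=(xy)z-x(yz)$; a superalgebra is associative if $(x,y,z)=0$ for all $x,y,z$. A superalgebra is right alternative if $(x,y,z)=-(-1)^{|y||z|}(x,z,y)$ for all homogeneous $x,y,z$. A $(-1,1)$-superalgebra is a right alternative superalgebra satisfying $(x,y,z)+(-1)^{|x||y|+|x||z|}(y,z,x)+(-1)^{|z||y|+|x||z|}(z,x,y)=0$ for all homogeneous $x,y,z$. *)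

(* Defs.v *)
From HB Require Import structures.
From mathcomp Require Import all_boot all_order all_algebra.
From mathcomp Require Import complex.
From mathcomp Require Import Rstruct.
Set Implicit Arguments. Unset Strict Implicit. Unset Printing Implicit Defensive.
Import Order.TTheory GRing.Theory Num.Theory.
Local Open Scope ring_scope.

Notation CC := (Rdefinitions.R)[i].

Section SuperAlg.
Variables (V : vectType CC) (A0 A1 : {vspace V}) (mul : V -> V -> V).

Definition hcomp (b : bool) : {vspace V} := if b then A1 else A0.

Definition psign (b c : bool) : CC := (-1) ^+ (b && c).

Definition bilinear_mul : Prop :=
  (forall (a : CC) (x y z : V), mul (a *: x + y) z = a *: mul x z + mul y z) /\
  (forall (a : CC) (x y z : V), mul z (a *: x + y) = a *: mul z x + mul z y).

Definition is_superalgebra_of_type (n m : nat) : Prop :=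
  [/\ bilinear_mul,
      (A0 + A1 = fullv)%VS,
      (A0 :&: A1 = 0)%VS,
      (\dim A0 = n /\ \dim A1 = m) &
      forall (i j : bool) (x y : V), x \in hcomp i -> y \in hcomp j ->
        mul x y \in hcomp (i (+) j)].

Definition assoc (x y z : V) : V := mul (mul x y) z - mul x (mul y z).

Definition is_associative : Prop := forall x y z : V, assoc x y z = 0.

Definition is_right_alternative : Prop :=
  forall (bx by_ bz : bool) (x y z : V),
    x \in hcomp bx -> y \in hcomp by_ -> z \in hcomp bz ->
    assoc x y z = - (psign by_ bz *: assoc x z y).

Definition is_m11_superalgebra : Prop :=
  is_right_alternative /\
  forall (bx by_ bz : bool) (x y z : V),
    x \in hcomp bx -> y \in hcomp by_ -> z \in hcomp bz ->
    assoc x y z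
    + (psign bx by_ * psign bx bz) *: assoc y z x
    + (psign bz by_ * psign bx bz) *: assoc z x y = 0.

End SuperAlg.

(* Main.v *)
Require Import Defs.
From HB Require Import structures.
From mathcomp Require Import all_boot all_order all_algebra.
From mathcomp Require Import complex Rstruct.
From mathcomp Require Import ring.
Set Implicit Arguments. Unset Strict Implicit. Unset Printing Implicit Defensive.
Import GRing.Theory Num.Theory.
Local Open Scope ring_scope.

Section RA2.
Variables (V : vectType CC) (mul : V -> V -> V).
Hypotheses (mulDl : forall x y z, mul (x + y) z = mul x z + mul y z)
  (mulZl : forall a x z, mul (a *: x) z = a *: mul x z)
  (mulDr : forall x y z, mul z (x + y) = mul z x + mul z y)
  (mulZr : forall a x z, mul z (a *: x) = a *: mul z x).
Variables (e1 e2 : V) (c111 c112 c121 c122 c211 c212 c221 c222 : CC).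
Definition lc p q := p *: e1 + q *: e2.
Hypotheses (h11 : mul e1 e1 = lc c111 c112) (h12 : mul e1 e2 = lc c121 c122)
  (h21 : mul e2 e1 = lc c211 c212) (h22 : mul e2 e2 = lc c221 c222).
Hypothesis free2 : forall p q, lc p q = 0 -> p = 0 /\ q = 0.
Hypothesis RA : forall x1 x2 y1 y2 z1 z2,
  assoc mul (lc x1 x2) (lc y1 y2) (lc z1 z2) = - assoc mul (lc x1 x2) (lc z1 z2) (lc y1 y2).

Definition M1 p q r s := p*r*c111 + p*s*c121 + q*r*c211 + q*s*c221.
Definition M2 p q r s := p*r*c112 + p*s*c122 + q*r*c212 + q*s*c222.
Definition A1 x1 x2 y1 y2 z1 z2 :=
  M1 (M1 x1 x2 y1 y2) (M2 x1 x2 y1 y2) z1 z2 - M1 x1 x2 (M1 y1 y2 z1 z2) (M2 y1 y2 z1 z2).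
Definition A2 x1 x2 y1 y2 z1 z2 :=
  M2 (M1 x1 x2 y1 y2) (M2 x1 x2 y1 y2) z1 z2 - M2 x1 x2 (M1 y1 y2 z1 z2) (M2 y1 y2 z1 z2).

Lemma lc_add p q r s : lc p q + lc r s = lc (p + r) (q + s).
Proof. by rewrite /lc !scalerDl addrACA. Qed.
Lemma lc_scale a p q : a *: lc p q = lc (a * p) (a * q).
Proof. by rewrite /lc scalerDr !scalerA. Qed.
Lemma lc_sub p q r s : lc p q - lc r s = lc (p - r) (q - s).
Proof. by rewrite /lc !scalerBl opprD addrACA. Qed.
Lemma mul_lcl p q z : mul (lc p q) z = p *: mul e1 z + q *: mul e2 z.
Proof. by rewrite /lc mulDl !mulZl. Qed.
Lemma mul_lcr p q z : mul z (lc p q) = p *: mul z e1 + q *: mul z e2.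
Proof. by rewrite /lc mulDr !mulZr. Qed.
Lemma mul_lc p q r s : mul (lc p q) (lc r s) = lc (M1 p q r s) (M2 p q r s).
Proof.
rewrite mul_lcl !mul_lcr h11 h12 h21 h22 !(lc_scale, lc_add).
by rewrite /lc; congr (_ *: _ + _ *: _); rewrite /M1 /M2; ring.
Qed.
Lemma assoc_lc x1 x2 y1 y2 z1 z2 :
  assoc mul (lc x1 x2) (lc y1 y2) (lc z1 z2) = lc (A1 x1 x2 y1 y2 z1 z2) (A2 x1 x2 y1 y2 z1 z2).
Proof. by rewrite /assoc !mul_lc lc_sub. Qed.

Lemma RAc x1 x2 y1 y2 z1 z2 :
  A1 x1 x2 y1 y2 z1 z2 + A1 x1 x2 z1 z2 y1 y2 = 0 /\ A2 x1 x2 y1 y2 z1 z2 + A2 x1 x2 z1 z2 y1 y2 = 0.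
Proof.
apply: free2; rewrite -lc_add -!assoc_lc RA.
by rewrite addNr.
Qed.

Lemma ra2 x1 x2 y1 y2 z1 z2 : assoc mul (lc x1 x2) (lc y1 y2) (lc z1 z2) = 0.
Proof.
have two : (2 : CC) != 0 by rewrite pnatr_eq0.
have K : forall a : CC, 2 * a = 0 -> a = 0.
  by move=> a /eqP; rewrite mulf_eq0 (negbTE two) /= => /eqP.
have [H1 H2] := RAc 1 0 1 0 1 0.
have [H3 H4] := RAc 1 0 0 1 0 1.
have [H5 H6] := RAc 1 0 1 0 0 1.
have [H7 H8] := RAc 0 1 1 0 1 0.
have [H9 H10] := RAc 0 1 0 1 0 1.
have [H11 H12] := RAc 0 1 1 0 0 1.
have E1 : 2 * A1 x1 x2 y1 y2 z1 z2 = x1*y1*z1*((1) * (A1 1 0 1 0 1 0 + A1 1 0 1 0 1 0)) + x1*y1*z2*((-1) * (A2 1 0 0 1 0 1 + A2 1 0 0 1 0 1)) + x1*y2*z1*((1) * (A2 1 0 0 1 0 1 + A2 1 0 0 1 0 1) + (2) * (A1 1 0 1 0 0 1 + A1 1 0 0 1 1 0)) + x1*y2*z2*((1) * (A1 1 0 0 1 0 1 + A1 1 0 0 1 0 1)) + x2*y1*z1*((1) * (A1 0 1 1 0 1 0 + A1 0 1 1 0 1 0)) + x2*y1*z2*((-1) * (A2 0 1 0 1 0 1 + A2 0 1 0 1 0 1)) + x2*y2*z1*((1) * (A2 0 1 0 1 0 1 + A2 0 1 0 1 0 1) + (2) * (A1 0 1 1 0 0 1 + A1 0 1 0 1 1 0))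 + x2*y2*z2*((1) * (A1 0 1 0 1 0 1 + A1 0 1 0 1 0 1)).
  by rewrite /A1 /A2 /M1 /M2; ring.
have E2 : 2 * A2 x1 x2 y1 y2 z1 z2 = x1*y1*z1*((1) * (A2 1 0 1 0 1 0 + A2 1 0 1 0 1 0)) + x1*y1*z2*((1) * (A1 1 0 1 0 1 0 + A1 1 0 1 0 1 0) + (2) * (A2 1 0 1 0 0 1 + A2 1 0 0 1 1 0)) + x1*y2*z1*((-1) * (A1 1 0 1 0 1 0 + A1 1 0 1 0 1 0)) + x1*y2*z2*((1) * (A2 1 0 0 1 0 1 + A2 1 0 0 1 0 1)) + x2*y1*z1*((1) * (A2 0 1 1 0 1 0 + A2 0 1 1 0 1 0)) + x2*y1*z2*((1) * (A1 0 1 1 0 1 0 + A1 0 1 1 0 1 0) + (2) * (A2 0 1 1 0 0 1 + A2 0 1 0 1 1 0)) + x2*y2*z1*((-1) * (A1 0 1 1 0 1 0 + A1 0 1 1 0 1 0)) + x2*y2*z2*((1) * (A2 0 1 0 1 0 1 + A2 0 1 0 1 0 1)).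
  by rewrite /A1 /A2 /M1 /M2; ring.
rewrite H1 H2 H3 H4 H5 H6 H7 H8 H9 H10 H11 H12 in E1 E2.
rewrite !(mulr0, addr0, add0r) in E1 E2.
by rewrite assoc_lc (K _ E1) (K _ E2) /lc !scale0r addr0.
Qed.
End RA2.

Section Main.
Variables (V : vectType CC) (A0 A1 : {vspace V}) (mul : V -> V -> V).
Hypotheses (bl : forall (a : CC) (x y z : V), mul (a *: x + y) z = a *: mul x z + mul y z)
  (br : forall (a : CC) (x y z : V), mul z (a *: x + y) = a *: mul z x + mul z y).

Lemma mul0l z : mul 0 z = 0.
Proof.
have h := bl 1 0 0 z; rewrite !scale1r addr0 in h.
by apply: (@addrI _ (mul 0 z)); rewrite addr0 -h.
Qed.
Lemma mul0r z : mul z 0 = 0.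
Proof.
have h := br 1 0 0 z; rewrite !scale1r addr0 in h.
by apply: (@addrI _ (mul z 0)); rewrite addr0 -h.
Qed.
Lemma mulDl x y z : mul (x + y) z = mul x z + mul y z.
Proof. by have := bl 1 x y z; rewrite !scale1r. Qed.
Lemma mulDr x y z : mul z (x + y) = mul z x + mul z y.
Proof. by have := br 1 x y z; rewrite !scale1r. Qed.
Lemma mulZl a x z : mul (a *: x) z = a *: mul x z.
Proof. by have := bl a x 0 z; rewrite !addr0 mul0l addr0. Qed.
Lemma mulZr a x z : mul z (a *: x) = a *: mul z x.
Proof. by have := br a x 0 z; rewrite !addr0 mul0r addr0. Qed.

Lemma assocDl x x' y z : assoc mul (x + x') y z = assoc mul x y z + assoc mul x' y z.
Proof. by rewrite /assoc !mulDl opprD addrACA. Qed.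
Lemma assocDm x y y' z : assoc mul x (y + y') z = assoc mul x y z + assoc mul x y' z.
Proof. by rewrite /assoc mulDr mulDl mulDl mulDr opprD addrACA. Qed.
Lemma assocDr x y z z' : assoc mul x y (z + z') = assoc mul x y z + assoc mul x y z'.
Proof. by rewrite /assoc !mulDr opprD addrACA. Qed.
Lemma assocZl k x y z : assoc mul (k *: x) y z = k *: assoc mul x y z.
Proof. by rewrite /assoc !mulZl scalerBr. Qed.
Lemma assocZm k x y z : assoc mul x (k *: y) z = k *: assoc mul x y z.
Proof. by rewrite /assoc mulZr mulZl mulZl mulZr scalerBr. Qed.
Lemma assocZr k x y z : assoc mul x y (k *: z) = k *: assoc mul x y z.
Proof. by rewrite /assoc !mulZr scalerBr. Qed.
End Main.

Unset Implicit Arguments.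

Theorem mainTheorem18 (V : vectType CC) (A0 A1 : {vspace V}) (mul : V -> V -> V) :
  \dim {: V} = 3%N ->
  is_superalgebra_of_type A0 A1 mul 2 1 ->
  is_m11_superalgebra A0 A1 mul ->
  is_associative mul.
Proof.
move=> _ [[bl br] hsum _ [d0 d1] hgr] [RAh M11].
have [f HA1] : exists f, A1 = <[f]>%VS.
  case/andP: (vbasisP A1) => /eqP hs _.
  have Hs : size (vbasis A1) = 1%N by rewrite size_tuple.
  move: hs Hs; case: (tval (vbasis A1)) => [|f [|]] //= hs _.
  by exists f; rewrite -hs span_seq1.
have [e1 [e2 [HA0 Hfr]]] : exists e1 e2, A0 = (<[e1]> + <[e2]>)%VS /\ free [:: e1; e2].
  case/andP: (vbasisP A0) => /eqP hs hf.
  have Hs : size (vbasis A0) = 2%N by rewrite size_tuple.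
  move: hs hf Hs; case: (tval (vbasis A0)) => [|e1 [|e2 [|]]] //= hs hf _.
  by exists e1, e2; rewrite -hs span_cons span_seq1.
have free2 : forall p q, lc e1 e2 p q = 0 -> p = 0 /\ q = 0.
  move=> p q; rewrite /lc => H.
  move: Hfr; rewrite free_cons seq1_free span_seq1 => /andP [Hn1 Hn2].
  have Hp : p = 0.
    case: (eqVneq p 0) => // pn0; exfalso; move/negP: Hn1; apply.
    have : p *: e1 = - (q *: e2) by apply/eqP; rewrite -addr_eq0 H.
    move/(congr1 ( *:%R p^-1)); rewrite scalerK // => ->.
    by rewrite rpredZ // rpredN rpredZ // memv_line.
  split=> //; move: H; rewrite Hp scale0r add0r => /eqP.
  by rewrite scaler_eq0 (negbTE Hn2) orbF => /eqP.
have dec0 : forall x, x \in A0 -> exists p q, x = lc e1 e2 p q.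
  move=> x; rewrite HA0 => /memv_addP [y /vlineP [p ->] [z /vlineP [q ->] ->]].
  by exists p, q.
have He1 : e1 \in A0 by rewrite HA0 (subvP (addvSl _ _)) ?memv_line.
have He2 : e2 \in A0 by rewrite HA0 (subvP (addvSr _ _)) ?memv_line.
have Hf : f \in A1 by rewrite HA1 memv_line.
have mul00 : forall x y, x \in A0 -> y \in A0 -> mul x y \in A0 := hgr false false.
have mul01 : forall x y, x \in A0 -> y \in A1 -> mul x y \in A1 := hgr false true.
have mul10 : forall x y, x \in A1 -> y \in A0 -> mul x y \in A1 := hgr true false.
have mul11 : forall x y, x \in A1 -> y \in A1 -> mul x y \in A0 := hgr true true.
have lcA0 : forall p q, lc e1 e2 p q \in A0 by move=> p q; rewrite /lc rpredD ?rpredZ.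
have even3 : forall x y z, x \in A0 -> y \in A0 -> z \in A0 -> assoc mul x y z = 0.
  move=> x y z /dec0 [x1 [x2 ->]] /dec0 [y1 [y2 ->]] /dec0 [z1 [z2 ->]].
  have [c111 [c112 h11]] := dec0 _ (mul00 _ _ He1 He1).
  have [c121 [c122 h12]] := dec0 _ (mul00 _ _ He1 He2).
  have [c211 [c212 h21]] := dec0 _ (mul00 _ _ He2 He1).
  have [c221 [c222 h22]] := dec0 _ (mul00 _ _ He2 He2).
  apply: (ra2 (mulDl bl) (mulZl bl) (mulDr br) (mulZr br) h11 h12 h21 h22 free2).
  move=> ? ? ? ? ? ?.
  by rewrite (RAh false false false) ?lcA0 // /psign /= expr0 scale1r.
have lam : forall a, a \in A0 -> exists k, mul a f = k *: f.
  by move=> a ha; apply/vlineP; rewrite -HA1 mul01.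
have mu : forall a, a \in A0 -> exists k, mul f a = k *: f.
  by move=> a ha; apply/vlineP; rewrite -HA1 mul10.
have mZl := mulZl bl. have mZr := mulZr br.
have C010 : forall a b, a \in A0 -> b \in A0 -> assoc mul a f b = 0.
  move=> a b ha hb; have [k hk] := lam a ha; have [k' hk'] := mu b hb.
  by rewrite /assoc hk hk' mZl mZr hk hk' !scalerA mulrC subrr.
have C001 : forall a b, a \in A0 -> b \in A0 -> assoc mul a b f = 0.
  move=> a b ha hb; have := RAh false true false a f b ha Hf hb.
  rewrite C010 // /psign /= expr0 scale1r => /eqP; rewrite eq_sym oppr_eq0 => /eqP.
  done.
have C100 : forall a b, a \in A0 -> b \in A0 -> assoc mul f a b = 0.
  move=> a b ha hb; have := M11 true false false f a b Hf ha hb.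
  by rewrite C001 // C010 // !scaler0 !addr0.
have Hu : mul f f \in A0 by rewrite mul11.
have key : forall b k k', b \in A0 -> mul b f = k *: f -> mul f b = k' *: f ->
    mul (mul f f) b = k *: mul f f /\ mul b (mul f f) = (3 * k - 2 * k') *: mul f f.
  move=> b k k' hb hk hk'.
  have E1 := RAh true true false f f b Hf Hf hb.
  have E2 := M11 true true false f f b Hf Hf hb.
  rewrite /assoc !(hk, hk', mZl, mZr) /psign /= expr0 expr1 !mulr1 scaleN1r !scale1r in E1 E2.
  have hw : mul (mul f f) b = k *: mul f f.
    move: E1; rewrite opprB => /(congr1 (+%R^~ (k' *: mul f f))).
    by rewrite !subrK.
  split=> //.
  move/eqP: E2; rewrite hw addrA subr_eq0 => /eqP <-.
  by rewrite opprB -!scalerBl -!scalerDl; congr (_ *: _); ring.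
have zero : forall a, a \in A0 -> exists k k', [/\ mul a f = k *: f, mul f a = k' *: f &
    (k - k') *: mul f f = 0].
  move=> a ha; have [k hk] := lam a ha; have [k' hk'] := mu a ha.
  exists k, k'; split => //.
  have [hua hau] := key a k k' ha hk hk'.
  have haa : mul (mul a a) f = (k * k) *: f.
    have := C001 a a ha ha; rewrite /assoc => /eqP; rewrite subr_eq0 => /eqP ->.
    by rewrite hk mZr hk scalerA.
  have haa' : mul f (mul a a) = (k' * k') *: f.
    have := C100 a a ha ha; rewrite /assoc => /eqP; rewrite subr_eq0 => /eqP <-.
    by rewrite hk' mZl hk' scalerA.
  have [_ haau] := key (mul a a) _ _ (mul00 _ _ ha ha) haa haa'.
  have E := RAh false false false a a (mul f f) ha ha Hu.
  rewrite /psign /= expr0 scale1r in E.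
  move: E; rewrite /assoc haau hau hua !mZl !mZr hau hua !scalerA.
  move/eqP; rewrite -addr_eq0 -!scalerBl -scalerDl.
  rewrite (_ : _ - _ + _ = - 6 * (k - k') ^+ 2); last by ring.
  rewrite scaler_eq0 mulf_eq0 expf_eq0 /=.
  case/orP => [/orP [|/eqP->] | /eqP ->]; rewrite ?scale0r ?scaler0 //.
  by rewrite oppr_eq0 pnatr_eq0.
have C110 : forall a, a \in A0 -> assoc mul f f a = 0.
  move=> a ha; have [k [k' [hk hk' hz]]] := zero a ha.
  have [hua _] := key a k k' ha hk hk'.
  by rewrite /assoc hua hk' mZr -scalerBl.
have C101 : forall a, a \in A0 -> assoc mul f a f = 0.
  move=> a ha; have [k [k' [hk hk' hz]]] := zero a ha.
  by rewrite /assoc hk' hk mZl mZr -scalerBl -opprB scaleNr hz oppr0.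
have C011 : forall a, a \in A0 -> assoc mul a f f = 0.
  move=> a ha; have [k [k' [hk hk' hz]]] := zero a ha.
  have [_ hau] := key a k k' ha hk hk'.
  rewrite /assoc hk mZl hau -scalerBl (_ : k - _ = -2 * (k - k')); last by ring.
  by rewrite -scalerA hz scaler0.
have C111 : assoc mul f f f = 0.
  have := M11 true true true f f f Hf Hf Hf.
  rewrite /psign /= expr1 mulrNN mulr1 scale1r -mulr2n -mulrSr -scaler_nat.
  by move/eqP; rewrite scaler_eq0 pnatr_eq0 orFb => /eqP.
have hom : forall bx by_ bz x y z, x \in hcomp A0 A1 bx -> y \in hcomp A0 A1 by_ ->
    z \in hcomp A0 A1 bz -> assoc mul x y z = 0.
  move=> bx by_ bz x y z; rewrite /hcomp.
  case: bx; case: by_; case: bz; rewrite ?HA1 => hx hy hz;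
  try (case/vlineP: hx => kx ->); try (case/vlineP: hy => ky ->);
  try (case/vlineP: hz => kz ->);
  rewrite ?(assocZl bl) ?(assocZm bl br) ?(assocZr br);
  rewrite ?C111 ?C110 ?C101 ?C011 ?C100 ?C010 ?C001 ?even3 ?scaler0 //.
have dec : forall x, exists x0 x1, [/\ x0 \in A0, x1 \in A1 & x = x0 + x1].
  move=> x; have : x \in (A0 + A1)%VS by rewrite hsum memvf.
  by case/memv_addP => x0 hx0 [x1 hx1 ->]; exists x0, x1.
move=> x y z.
have [x0 [x1 [hx0 hx1 ->]]] := dec x.
have [y0 [y1 [hy0 hy1 ->]]] := dec y.
have [z0 [z1 [hz0 hz1 ->]]] := dec z.
rewrite !(assocDl bl, assocDm bl br, assocDr br).
rewrite (hom false false false x0 y0 z0) // (hom false false true x0 y0 z1) //.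
rewrite (hom false true false x0 y1 z0) // (hom false true true x0 y1 z1) //.
rewrite (hom true false false x1 y0 z0) // (hom true false true x1 y0 z1) //.
rewrite (hom true true false x1 y1 z0) // (hom true true true x1 y1 z1) //.
by rewrite !addr0.
Qed.
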